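(* Let $c\in\mathbb{C}(t)$, $c\notin\{0,1,t\}$, with homogeneous lift $C$, and let $F_1=(P_1,Q_1)$, $d$ and $G_C$ be as in the context. Then $$G_C(1,0)=\frac1d\log|P_1(1,0)|,\qquad G_C(0,1)=\frac1d\log|P_1(0,1)|,\qquad G_C(1,1)=\frac1d\log|P_1(1,1)-Q_1(1,1)|.$$
   Context: $F_{t_1,t_2}(z,w)=\big((t_1w^2-t_2z^2)^2,\;4t_2zw(w-z)(t_1w-t_2z)\big)$. $C=(c_1,c_2)$ is a pair of coprime homogeneous polynomials in $(t_1,t_2)$ of equal degree with $c(t)=c_1(t,1)/c_2(t,1)$. $F_1=F_{t_1,t_2}(C)/\gcd(F_{t_1,t_2}(C))=(P_1,Q_1)$ (dividing by the gcd of the two coordinates), $d=\deg F_1$, $F_{n+1}=F_{t_1,t_2}(F_n)/t_2^2$ (substitution of the coordinates of $F_n$ for $(z,w)$), and $G_C(t_1,t_2)=\lim_{n\to\infty}\frac{1}{4^{n-1}d}\log\max\{|\cdot|,|\cdot|\}$ of $F_n(t_1,t_2)$, the locally uniform limit on $\mathbb{C}^2\setminus\{(0,0)\}$. *)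

(* Defs.v *)
From HB Require Import structures.
From mathcomp Require Import all_boot all_order all_algebra.
From mathcomp Require Import boolp classical_sets filter reals topology normedtype sequences exp.
From mathcomp Require Export complex.
Import Order.TTheory GRing.Theory Num.Theory numFieldNormedType.Exports.

Set Implicit Arguments.
Unset Strict Implicit.
Unset Printing Implicit Defensive.

Local Open Scope ring_scope.

Section Defs.
Variable R : realType.
Local Notation C := (R[i]).

(* Polynomials in the two variables (t1, t2) over C:
   outer variable = t2, inner variable = t1.  So p = \sum_j p`_j(t1) t2^j. *)
Definition bpoly := {poly {poly C}}.

Definition T1 : bpoly := ('X)%:P.
Definition T2 : bpoly := 'X.

Definition beval (p : bpoly) (a b : C) : C := (p.[b%:P]).[a].

(* p is homogeneous of total degree k (0 is homogeneous of every degree) *)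
Definition homog (k : nat) (p : bpoly) : Prop :=
  forall i j : nat, ((p`_j)`_i != 0) -> (i + j = k)%N.

Definition bdvd (h p : bpoly) : Prop := exists a : bpoly, p = h * a.
Definition bcoprime (p q : bpoly) : Prop :=
  forall h : bpoly, bdvd h p -> bdvd h q -> h \is a GRing.unit.

Definition Fmap (z w : bpoly) : bpoly * bpoly :=
  ((T1 * w ^+ 2 - T2 * z ^+ 2) ^+ 2,
   4%:R * T2 * z * w * (w - z) * (T1 * w - T2 * z)).

(* division by t2^2 (t2 is the outer variable, so this is drop_poly 2;
   it is exact division whenever t2^2 divides the polynomial) *)
Definition divT2sq (p : bpoly) : bpoly := drop_poly 2 p.

(* Fseq P1 Q1 n = F_{n+1}, with F_1 = (P1, Q1) and
   F_{n+1} = F_{t1,t2}(F_n) / t2^2 *)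
Fixpoint Fseq (P1 Q1 : bpoly) (n : nat) : bpoly * bpoly :=
  match n with
  | 0 => (P1, Q1)
  | n.+1 => let: (p, q) := Fseq P1 Q1 n in
            let: (p', q') := Fmap p q in (divT2sq p', divT2sq q')
  end.

Definition cabs (z : C) : R := Normc.normc z.

(* Gseq P1 Q1 d a b n = 1/(4^(n) d) log max(|P_{n+1}(a,b)|, |Q_{n+1}(a,b)|),
   i.e. the (n+1)-th term of the sequence defining G_C(a,b). *)
Definition Gseq (P1 Q1 : bpoly) (d : nat) (a b : C) (n : nat) : R :=
  ln (Num.max (cabs (beval (Fseq P1 Q1 n).1 a b))
              (cabs (beval (Fseq P1 Q1 n).2 a b)))
  / ((4 ^ n * d)%N)%:R.

End Defs.

(* Main.v *)
Require Import Defs.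
From HB Require Import structures.
From mathcomp Require Import all_boot all_order all_algebra.
From mathcomp Require Import boolp classical_sets filter reals topology normedtype sequences exp.
From mathcomp Require Import complex.
From mathcomp Require Import ring lra.
Import Order.TTheory GRing.Theory Num.Theory numFieldNormedType.Exports.
Set Implicit Arguments. Unset Strict Implicit. Unset Printing Implicit Defensive.
Local Open Scope ring_scope. Local Open Scope classical_set_scope.

Section Alg.
Variable R : realType.
Local Notation C := (R[i]).
Local Notation bp := (bpoly R).

Lemma cancelX (A B : bp) : 'X * A = 'X * B -> A = B.
Proof. apply: mulfI; by rewrite polyX_eq0. Qed.

Lemma root0 (p : bp) : p.[0] = 0 -> exists q, p = 'X * q.
Proof.
move=> h; have /factor_theorem [q ->] : root p 0 by apply/eqP.
by exists q; rewrite subr0 mulrC.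
Qed.

Lemma X_nunit : ~ (('X : bp) \is a GRing.unit).
Proof. by rewrite poly_unitE size_polyX. Qed.

Lemma T1_0 : (T1 R).[0] = 'X.
Proof. by rewrite /T1 hornerC. Qed.

Lemma Q1_X (c1 c2 g P1 Q1 : bp) : bcoprime c1 c2 ->
  Fmap c1 c2 = (g * P1, g * Q1) -> exists q, Q1 = 'X * q.
Proof.
move=> cop [eA eS].
have [/root0 //|Q0] := eqVneq Q1.[0] 0.
exfalso.
have : (g * Q1).[0] = 0 by rewrite -eS /T2 !hornerE.
rewrite hornerM => /eqP; rewrite mulf_eq0 (negbTE Q0) orbF => /eqP /root0 [g1 eg].
have : (g * P1).[0] = 0 by rewrite eg -mulrA hornerM hornerX mul0r.
rewrite -eA /T2 /T1 !hornerE subr0 => /eqP; rewrite expf_eq0 /= -mulrA mulf_eq0 polyX_eq0 /= mulf_eq0 orbb.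
move=> /eqP /root0 [b eb].
have e1 : g1 * Q1 = 'X^2 * (4%:R * c1 * b * ('X * b - c1) * (T1 R * b - c1)).
  apply: cancelX; rewrite mulrA -eg -eS eb /T2; ring.
have : (g1 * Q1).[0] = 0 by rewrite e1 hornerM hornerXn expr0n /= mul0r.
rewrite hornerM => /eqP; rewrite mulf_eq0 (negbTE Q0) orbF => /eqP /root0 [g2 eg1].
have e2 : g2 * Q1 = 'X * (4%:R * c1 * b * ('X * b - c1) * (T1 R * b - c1)).
  apply: cancelX; rewrite mulrA -eg1 e1; ring.
have : (g2 * Q1).[0] = 0 by rewrite e2 hornerM hornerX mul0r.
rewrite hornerM => /eqP; rewrite mulf_eq0 (negbTE Q0) orbF => /eqP /root0 [g3 eg2].
have e3 : 'X * (g3 * P1) = (T1 R * 'X * b ^+ 2 - c1 ^+ 2) ^+ 2.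
  apply: cancelX; apply: cancelX.
  have -> : 'X * ('X * ('X * (g3 * P1))) = g * P1 by rewrite eg eg1 eg2; ring.
  rewrite -eA /T2 eb; ring.
have : ((T1 R * 'X * b ^+ 2 - c1 ^+ 2) ^+ 2).[0] = 0 by rewrite -e3 hornerM hornerX mul0r.
rewrite /T1 !hornerE => /eqP; rewrite expf_eq0 /= oppr_eq0 expf_eq0 /= => /eqP /root0 [a ea].
by apply: X_nunit; apply: cop; [exists a | exists b].
Qed.

Lemma bevalM (p q : bp) a b : beval (p * q) a b = beval p a b * beval q a b.
Proof. by rewrite /beval !hornerM. Qed.
Lemma bevalB (p q : bp) a b : beval (p - q) a b = beval p a b - beval q a b.
Proof. by rewrite /beval ?hornerE ?hornerX ?hornerC ?hornerD ?hornerN ?hornerMn. Qed.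
Lemma bevalX (p : bp) n a b : beval (p ^+ n) a b = beval p a b ^+ n.
Proof. by rewrite /beval !horner_exp. Qed.
Lemma bevaln n a b : beval (n%:R : bp) a b = n%:R.
Proof. by rewrite /beval -polyC_natr hornerC -polyC_natr hornerC. Qed.
Lemma bevalT2 a b : beval ('X : bp) a b = b.
Proof. by rewrite /beval ?hornerE ?hornerX ?hornerC ?hornerD ?hornerN ?hornerMn. Qed.
Lemma bevalT1 a b : beval (T1 R) a b = a.
Proof. by rewrite /beval /T1 !hornerE. Qed.

Fixpoint pq (P q : bp) n : bp * bp :=
  match n with
  | 0 => (P, q)
  | n.+1 => let: (p, r) := pq P q n in
      ((T1 R * 'X * r ^+ 2 - p ^+ 2) ^+ 2,
       4%:R * p * r * ('X * r - p) * (T1 R * r - p))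
  end.

Lemma drop2 (r : bp) : divT2sq ('X^2 * r) = r.
Proof. by rewrite /divT2sq mulrC drop_polyMXn_id. Qed.

Lemma Fseq_pq P q n : Fseq P ('X * q) n = ((pq P q n).1, 'X * (pq P q n).2).
Proof.
elim: n => [//|n IH] /=; rewrite IH; case: (pq P q n) => p r /=.
rewrite /Fmap /T2.
have -> : (T1 R * ('X * r) ^+ 2 - 'X * p ^+ 2) ^+ 2
   = 'X^2 * (T1 R * 'X * r ^+ 2 - p ^+ 2) ^+ 2 by ring.
have -> : 4%:R * 'X * p * ('X * r) * ('X * r - p) * (T1 R * ('X * r) - 'X * p)
   = 'X^2 * ('X * (4%:R * p * r * ('X * r - p) * (T1 R * r - p))) by ring.
by rewrite !drop2.
Qed.
End Alg.
Arguments pq {R}.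


Section Ana.
Variable R : realType.

Lemma Mbound (M : nat -> R) : (forall n, 1 <= M n) ->
  (forall n, M n.+1 <= 8%:R * M n ^+ 2) ->
  forall n, 8%:R * M n <= (8%:R * M 0) ^+ (2 ^ n).
Proof.
move=> M1 MS; elim=> [|n IH]; first by rewrite expn0 expr1.
rewrite expnS mulnC exprM.
have h1 : 0 <= 8%:R * M n by have := M1 n; lra.
apply: (le_trans (y := (8%:R * M n) ^+ 2)).
  have := MS n; rewrite !expr2; nra.
rewrite !expr2; apply: ler_pM => //.
Qed.

Lemma lnm_bound (m M : nat -> R) : (forall n, 1 <= M n) ->
  (forall n, M n.+1 <= 8%:R * M n ^+ 2) ->
  (forall n, 2^-1 <= m n) -> (forall n, m n <= 3%:R * M n) ->
  forall n, `|ln (m n)| <= 2%:R ^+ n * (ln 3%:R + ln (8%:R * M 0)).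
Proof.
move=> M1 MS m2 m3 n.
have Mp : forall k, 0 < M k by move=> k; have := M1 k; lra.
have mp : 0 < m n by have := m2 n; lra.
have l3 : 0 <= ln (3%:R : R) by apply: ln_ge0; rewrite ler1n.
have l8 : 0 <= ln (8%:R * M 0) by apply: ln_ge0; have := M1 0; lra.
have t1 : 1 <= (2%:R : R) ^+ n by rewrite exprn_ege1 // ler1n.
have h3M : 0 < 3%:R * M n by have := Mp n; lra.
have h8M : 0 < 8%:R * M n by have := Mp n; lra.
have h80 : 0 < 8%:R * M 0 by have := Mp 0; lra.
have h8p : 0 < (8%:R * M 0) ^+ (2 ^ n) by apply: exprn_gt0.
have h2m : 0 < 2%:R * m n by lra.
have up : ln (m n) <= ln 3%:R + 2%:R ^+ n * ln (8%:R * M 0).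
  have e1 : ln (m n) <= ln (3%:R * M n) by rewrite ler_ln ?posrE.
  rewrite lnM ?posrE // in e1.
  have e2 : ln (M n) <= ln (8%:R * M n).
    by rewrite ler_ln ?posrE //; have := Mp n; lra.
  have e3 : ln (8%:R * M n) <= ln ((8%:R * M 0) ^+ (2 ^ n)).
    by rewrite ler_ln ?posrE //; exact: Mbound.
  rewrite lnXn // -[X in _ <= X]mulr_natl natrX in e3.
  lra.
have lo : - ln 3%:R <= ln (m n).
  have e1 : ln (2%:R : R) <= ln 3%:R by rewrite ler_ln ?posrE // ler_nat.
  have e2 : 0 <= ln (2%:R * m n) by apply: ln_ge0; have := m2 n; lra.
  rewrite lnM ?posrE // in e2.
  lra.
rewrite ler_norml; apply/andP; split; nra.
Qed.


Lemma key (a0 : R) (A m M : nat -> R) (d : nat) :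
  0 <= a0 ->
  (forall n, A n.+1 = a0 ^+ (4 ^ n.+1) * m n.+1) ->
  (forall n, 1 <= M n) -> (forall n, M n.+1 <= 8%:R * M n ^+ 2) ->
  (forall n, 2^-1 <= m n) -> (forall n, m n <= 3%:R * M n) ->
  (a0 = 0 -> forall n, m n = 1) ->
  (fun n => ln (A n) / ((4 ^ n * d)%N)%:R) @ \oo --> ln a0 / d%:R.
Proof.
move=> a0ge hA M1 MS m2 m3 m1.
case: d => [|d].
  rewrite (eq_cvg _ (g := fun=> 0)); first by rewrite invr0 mulr0; exact: cvg_cst.
  by move=> n; rewrite muln0 invr0 mulr0.
set D : R := d.+1%:R.
have Dp : 0 < D by rewrite ltr0n.
set K := ln 3%:R + ln (8%:R * M 0).
have Kge : 0 <= K.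
  have l3 : 0 <= ln (3%:R : R) by apply: ln_ge0; rewrite ler1n.
  have l8 : 0 <= ln (8%:R * M 0) by apply: ln_ge0; have := M1 0; lra.
  rewrite /K; lra.
have den n : ((4 ^ n.+1 * d.+1)%N)%:R = 4%:R * (2%:R ^+ n) ^+ 2 * D :> R.
  rewrite natrM natrX /D; congr (_ * _).
  rewrite exprS; congr (_ * _); rewrite -exprM mulnC exprM; congr (_ ^+ _).
  by rewrite expr2 -natrM.
set e := fun n => ln (m n.+1) / ((4 ^ n.+1 * d.+1)%N)%:R.
have Heq : forall n, ln (A n.+1) / ((4 ^ n.+1 * d.+1)%N)%:R = ln a0 / D + e n.
  move=> n; rewrite hA /e.
  have [a00|a0p] := eqVneq a0 0.
    rewrite a00 (m1 a00) expr0n /= expn_eq0 /= mul0r ln0 // ln1 !mul0r addr0 //.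
  have a0g : 0 < a0 by rewrite lt_def a0p a0ge.
  have mp : 0 < m n.+1 by have := m2 n.+1; lra.
  have y0 : 0 < (2%:R : R) ^+ n by apply: exprn_gt0.
  have e4 : ((4 ^ n.+1)%N%:R : R) = 4%:R * (2%:R ^+ n) ^+ 2.
    rewrite natrX exprS; congr (_ * _); rewrite -exprM mulnC exprM; congr (_ ^+ _).
    by rewrite expr2 -natrM.
  rewrite lnM ?posrE ?exprn_gt0 // lnXn // den -[ln a0 *+ _]mulr_natl e4.
  field; apply/andP; split; apply: lt0r_neq0 => //; have := ler0n R d; lra.
have He : e @ \oo --> 0.
  have bnd n : `|e n| <= K / D * 2^-1 ^+ n.
    have y0 : 0 < (2%:R : R) ^+ n by apply: exprn_gt0.
    have dp : 0 < 4%:R * (2%:R ^+ n) ^+ 2 * D by apply: mulr_gt0 => //; apply: mulr_gt0 => //; apply: exprn_gt0.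
    rewrite /e den normrM normfV (gtr0_norm dp) ler_pdivrMr //.
    have -> : K / D * 2^-1 ^+ n * (4%:R * (2%:R ^+ n) ^+ 2 * D) = 4%:R * 2%:R ^+ n * K.
      rewrite exprVn; field; apply/andP; split; apply: lt0r_neq0 => //; have := ler0n R d; lra.
    have := @lnm_bound m M M1 MS m2 m3 n.+1; rewrite -/K exprS; nra.
  have g0 : geometric (K / D) (2^-1 : R) @ \oo --> 0.
    apply: cvg_geometric; rewrite ger0_norm ?invr_ge0 // invf_lt1 //; lra.
  apply: (squeeze_cvgr (f := fun n => - geometric (K / D) (2^-1 : R) n)
           (h := geometric (K / D) (2^-1 : R))).
  - apply: nearW => n /=; rewrite -ler_norml; exact: bnd.
  - by rewrite -oppr0; apply: cvgN.
  - exact: g0.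
have H : (fun n => ln (A n.+1) / ((4 ^ n.+1 * d.+1)%N)%:R) @ \oo --> ln a0 / D.
  have H2 : (fun n => ln a0 / D + e n) @ \oo --> ln a0 / D + 0.
    by apply: cvgD => //; exact: cvg_cst.
  rewrite addr0 in H2.
  by rewrite (eq_cvg _ _ Heq).
by rewrite -cvg_shiftS; exact: H.
Qed.
End Ana.

Section Cabs.
Variable R : realType.
Local Notation C := (R[i]).

Lemma cabs_ge0 (z : C) : 0 <= cabs z.
Proof. by case: z => x y; rewrite /cabs /=; exact: sqrtr_ge0. Qed.
Lemma cabsM (x y : C) : cabs (x * y) = cabs x * cabs y.
Proof. exact: ComplexField.Normc.normcM. Qed.
Lemma cabsD (x y : C) : cabs (x + y) <= cabs x + cabs y.
Proof. exact: (@le_normcD R x y). Qed.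
Lemma cabsN (x : C) : cabs (- x) = cabs x.
Proof. exact: (@normcN R x). Qed.
Lemma cabs0 : cabs (0 : C) = 0.
Proof. exact: ComplexField.Normc.normc0. Qed.
Lemma cabs_eq0 (x : C) : cabs x = 0 -> x = 0.
Proof. exact: ComplexField.Normc.eq0_normc. Qed.
Lemma cabsn n : cabs (n%:R : C) = n%:R.
Proof. by rewrite /cabs (@normcMn R 1 n) ComplexField.Normc.normc1. Qed.
Lemma cabs1 : cabs (1 : C) = 1.
Proof. exact: ComplexField.Normc.normc1. Qed.
Lemma cabsX (x : C) n : cabs (x ^+ n) = cabs x ^+ n.
Proof.
elim: n => [|n IH]; first by rewrite !expr0 /cabs ComplexField.Normc.normc1.
by rewrite !exprS cabsM IH.
Qed.
Lemma cabsV (x : C) : cabs x^-1 = (cabs x)^-1.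
Proof. exact: ComplexField.Normc.normcV. Qed.
Lemma cabsB (x y : C) : cabs (x - y) <= cabs x + cabs y.
Proof. by rewrite -(cabsN y); exact: cabsD. Qed.
Lemma cabs_gt0 (x : C) : x != 0 -> 0 < cabs x.
Proof.
move=> x0; rewrite lt_def cabs_ge0 andbT; apply/eqP => /cabs_eq0 h.
by rewrite h eqxx in x0.
Qed.

Lemma Mstep (w w' : C) : cabs w' <= 4%:R * cabs w * (cabs w + 1) ->
  Num.max 1 (cabs w') <= 8%:R * (Num.max 1 (cabs w)) ^+ 2.
Proof.
move=> h; set M := Num.max 1 (cabs w).
have M1 : 1 <= M by rewrite le_max lexx.
have Mw : cabs w <= M by rewrite le_max lexx orbT.
have w0 := cabs_ge0 w.
rewrite ge_max; apply/andP; split; rewrite expr2; nra.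
Qed.
End Cabs.
Section Points.
Variable R : realType.
Local Notation C := (R[i]).
Local Notation bp := (bpoly R).
Variables (P q : bp) (d : nat).

Definition pp (a b : C) n := beval (pq P q n).1 a b.
Definition rr (a b : C) n := beval (pq P q n).2 a b.

Lemma pp_rec a b n : pp a b n.+1 = (a * b * rr a b n ^+ 2 - pp a b n ^+ 2) ^+ 2.
Proof.
rewrite /pp /rr /=; case: (pq P q n) => p r /=.
by rewrite !(bevalM, bevalB, bevalX, bevaln, bevalT1, bevalT2).
Qed.

Lemma rr_rec a b n : rr a b n.+1 =
  4%:R * pp a b n * rr a b n * (b * rr a b n - pp a b n) * (a * rr a b n - pp a b n).
Proof.
rewrite /pp /rr /=; case: (pq P q n) => p r /=.
by rewrite !(bevalM, bevalB, bevalX, bevaln, bevalT1, bevalT2).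
Qed.

Lemma Gseq_pq a b n : Gseq P ('X * q) d a b n =
  ln (Num.max (cabs (pp a b n)) (cabs (b * rr a b n))) / ((4 ^ n * d)%N)%:R.
Proof. by rewrite /Gseq Fseq_pq /= bevalM bevalT2. Qed.

Lemma point10 : Gseq P ('X * q) d 1 0 @ \oo --> ln (cabs (beval P 1 0)) / d%:R.
Proof.
have pX n : pp 1 0 n = pp 1 0 0 ^+ (4 ^ n).
  elim: n => [|n IH]; first by rewrite expr1.
  rewrite pp_rec IH mulr0 mul0r sub0r sqrrN -!exprM; congr (_ ^+ _).
  by rewrite expnS -mulnA mulnC.
have -> : beval P 1 0 = pp 1 0 0 by [].
rewrite (eq_cvg _ _ (Gseq_pq 1 0)).
apply: (@key _ _ _ (fun=> 1) (fun=> 1)) => //.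
- exact: cabs_ge0.
- move=> n; rewrite mulr1 mul0r cabs0 pX cabsX.
  by apply/max_idPl; apply: exprn_ge0; exact: cabs_ge0.
- move=> n; rewrite expr1n mulr1; lra.
- move=> n; lra.
- move=> n; lra.
Qed.

Lemma maxdiv (p r : C) : p != 0 ->
  Num.max (cabs p) (cabs r) = cabs p * Num.max 1 (cabs (r / p)).
Proof.
move=> p0; have cp := cabs_gt0 p0.
rewrite maxr_pMr ?cabs_ge0 // mulr1 cabsM cabsV mulrCA divff ?mulr1 //.
exact: lt0r_neq0.
Qed.

Lemma point01 : Gseq P ('X * q) d 0 1 @ \oo --> ln (cabs (beval P 0 1)) / d%:R.
Proof.
have pX n : pp 0 1 n = pp 0 1 0 ^+ (4 ^ n).
  elim: n => [|n IH]; first by rewrite expr1.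
  rewrite pp_rec IH !mul0r sub0r sqrrN -!exprM; congr (_ ^+ _).
  by rewrite expnS -mulnA mulnC.
have -> : beval P 0 1 = pp 0 1 0 by [].
rewrite (eq_cvg _ _ (Gseq_pq 0 1)).
have [p00|p0n] := eqVneq (pp 0 1 0) 0.
  apply: (@key _ _ _ (fun=> 1) (fun=> 1)) => //.
  - exact: cabs_ge0.
  - move=> n; have z k : (0 : C) ^+ (4 ^ k) = 0 by rewrite expr0n expn_eq0.
    rewrite rr_rec (pX n.+1) (pX n) p00 !z !(mulr0, mul0r) cabs0 maxxx.
    by rewrite expr0n expn_eq0 mul0r.
  - move=> n; rewrite expr1n mulr1; lra.
  - move=> n; lra.
  - move=> n; lra.
have pn n : pp 0 1 n != 0 by rewrite pX expf_neq0.
set w := fun n => rr 0 1 n / pp 0 1 n.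
set M := fun n => Num.max 1 (cabs (w n)).
have M1 n : 1 <= M n by rewrite /M le_max lexx.
apply: (@key _ _ _ M M) => //.
- exact: cabs_ge0.
- by move=> n; rewrite mul1r maxdiv // -cabsX -pX /M /w.
- move=> n; rewrite /M; apply: Mstep.
  have -> : w n.+1 = - 4%:R * w n * (w n - 1).
    rewrite /w pp_rec rr_rec; field; rewrite pn //.
  have hb := cabsB (w n) 1; rewrite cabs1 /w cabsM cabsV in hb.
  have x0 : 0 <= cabs (rr 0 1 n) * (cabs (pp 0 1 n))^-1.
    by rewrite mulr_ge0 ?invr_ge0 ?cabs_ge0.
  rewrite !cabsM cabsN cabsn cabsV; nra.
- move=> n; have := M1 n; lra.
- move=> n; have := M1 n; lra.
- by move=> /cabs_eq0 h; rewrite h eqxx in p0n.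
Qed.

Lemma point11 : Gseq P ('X * q) d 1 1 @ \oo -->
  ln (cabs (beval P 1 1 - beval ('X * q) 1 1)) / d%:R.
Proof.
set u := fun n => pp 1 1 n - rr 1 1 n.
have uS n : u n.+1 = u n ^+ 4.
  rewrite /u pp_rec rr_rec; ring.
have uX n : u n = u 0 ^+ (4 ^ n).
  elim: n => [|n IH]; first by rewrite expr1.
  by rewrite uS IH -exprM expnS mulnC.
have -> : beval P 1 1 - beval ('X * q) 1 1 = u 0 by rewrite bevalM bevalT2 mul1r.
rewrite (eq_cvg _ _ (Gseq_pq 1 1)).
have [u00|u0n] := eqVneq (u 0) 0.
  apply: (@key _ _ _ (fun=> 1) (fun=> 1)) => //.
  - exact: cabs_ge0.
  - move=> n; have un : u n = 0 by rewrite uX u00 expr0n expn_eq0.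
    have e : pp 1 1 n = rr 1 1 n by apply/eqP; rewrite -subr_eq0; apply/eqP.
    rewrite pp_rec rr_rec e !mul1r !subrr mulr0 expr2 mulr0 cabs0 maxxx.
    by rewrite u00 cabs0 expr0n expn_eq0 mul0r.
  - move=> n; rewrite expr1n mulr1; lra.
  - move=> n; lra.
  - move=> n; lra.
have un n : u n != 0 by rewrite uX expf_neq0.
have cu n : 0 < cabs (u n) by apply: cabs_gt0.
set w := fun n => rr 1 1 n / u n.
set M := fun n => Num.max 1 (cabs (w n)).
have M1 n : 1 <= M n by rewrite /M le_max lexx.
have Mw n : cabs (w n) <= M n by rewrite /M le_max lexx orbT.
set A := fun n => Num.max (cabs (pp 1 1 n)) (cabs (1 * rr 1 1 n)).
apply: (@key _ _ A (fun n => A n / cabs (u n)) M) => //.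
- exact: cabs_ge0.
- move=> n; rewrite -cabsX -uX mulrC divfK //; exact: lt0r_neq0.
- move=> n; rewrite /M; apply: Mstep.
  have -> : w n.+1 = 4%:R * (1 + w n) * w n.
    rewrite /w uS rr_rec; rewrite /u; field; rewrite -/(u n) un //.
  have hb := cabsD 1 (w n); rewrite cabs1 in hb.
  have x0 := cabs_ge0 (w n).
  rewrite cabsM [cabs (4%:R * _)]cabsM cabsn; nra.
- move=> n; rewrite ler_pdivlMr // /A mul1r.
  have h : cabs (u n) <= cabs (pp 1 1 n) + cabs (rr 1 1 n) by exact: cabsB.
  have h1 : cabs (pp 1 1 n) <= Num.max (cabs (pp 1 1 n)) (cabs (rr 1 1 n)) by rewrite le_max lexx.
  have h2 : cabs (rr 1 1 n) <= Num.max (cabs (pp 1 1 n)) (cabs (rr 1 1 n)) by rewrite le_max lexx orbT.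
  lra.
- move=> n; rewrite ler_pdivrMr // /A mul1r.
  have er : rr 1 1 n = u n * w n by rewrite /w mulrC divfK.
  have hr : cabs (rr 1 1 n) = cabs (u n) * cabs (w n) by rewrite er cabsM.
  have hp : cabs (pp 1 1 n) <= cabs (u n) + cabs (rr 1 1 n).
    have ep : pp 1 1 n = u n + rr 1 1 n by rewrite /u /= subrK.
    by rewrite {1}ep; exact: cabsD.
  have := M1 n; have := Mw n; have := cu n; have := cabs_ge0 (w n).
  move=> h1 h2 h3 h4; rewrite ge_max; apply/andP; split; nra.
- by move=> /cabs_eq0 h; rewrite h eqxx in u0n.
Qed.
End Points.

Unset Implicit Arguments. Set Strict Implicit.

Theorem proposition4p1 (R : realType) (e : nat) (c1 c2 : bpoly R)
  (g P1 Q1 : bpoly R) (d : nat) :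
  (* C = (c1, c2): coprime homogeneous polynomials of equal degree e,
     lifting c = c1(t,1)/c2(t,1) in C(t) *)
  homog e c1 -> homog e c2 -> c2 != 0 -> bcoprime c1 c2 ->
  (* c \notin {0, 1, t} *)
  c1 != 0 -> c1 != c2 -> c1 * T2 R != c2 * T1 R ->
  (* F_1 = (P1, Q1) = F_{t1,t2}(C) / gcd, of degree d *)
  Fmap c1 c2 = (g * P1, g * Q1) -> bcoprime P1 Q1 ->
  homog d P1 -> homog d Q1 ->
  (* G_C(1,0), G_C(0,1), G_C(1,1) *)
  Gseq P1 Q1 d 1 0 @ \oo --> ln (cabs (beval P1 1 0)) / d%:R /\
  Gseq P1 Q1 d 0 1 @ \oo --> ln (cabs (beval P1 0 1)) / d%:R /\
  Gseq P1 Q1 d 1 1 @ \oo --> ln (cabs (beval P1 1 1 - beval Q1 1 1)) / d%:R.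
Proof.
move=> _ _ _ cop _ _ _ hF _ _ _.
have [q ->] := Q1_X cop hF.
split; first exact: point10.
split; first exact: point01.
exact: point11.
Qed.
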